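(* Let $\boldsymbol{\mathcal{A}}\in\mathbb{C}^{N\times N\times M\times M}$ and $\mathbf{v},\mathbf{w}\in\mathbb{C}^N$ with $\mathbf{w}^H\mathbf{v}=1$, and run the tensor non-Hermitian Lanczos process (described in the context) with arbitrary nonsingular choices $\boldsymbol{\gamma}_2,\boldsymbol{\gamma}_3,\dots$. Let $n\ge1$ and suppose $\boldsymbol{\beta}_2,\dots,\boldsymbol{\beta}_n$ are all nonsingular, so that $V_1,\dots,V_n$, $W_1^D,\dots,W_n^D$ and $\boldsymbol{\alpha}_1,\dots,\boldsymbol{\alpha}_n$ are defined. Then: (a) $W_k^D*V_j=\delta_{kj}I_M$ for all $1\le j,k\le n$, i.e. $\boldsymbol{\mathcal{W}}_n*\boldsymbol{\mathcal{V}}_n=\boldsymbol{\mathcal{I}}_*\in\mathbb{C}^{n\times n\times M\times M}$; (b) $\langle V_1,\dots,V_n\rangle=\mathcal{K}_n(\boldsymbol{\mathcal{A}},V)$ and $\langle W_1^D,\dots,W_n^D\rangle=\mathcal{K}_n^D(W^D,\boldsymbol{\mathcal{A}})$; (c) $\boldsymbol{\mathcal{T}}_n=\boldsymbol{\mathcal{W}}_n*\boldsymbol{\mathcal{A}}*\boldsymbol{\mathcal{V}}_n$.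
   Context: Slicing and products: for a 4-mode tensor, $\boldsymbol{\mathcal{A}}_{i_1,i_2,:,:}$ denotes the $M\times M$ matrix slice; for a 3-mode tensor, $A_{i,:,:}$ likewise. $*$-tensor product: $(\boldsymbol{\mathcal{A}}*\boldsymbol{\mathcal{B}})_{i_1,i_2,:,:}=\sum_k\boldsymbol{\mathcal{A}}_{i_1,k,:,:}\boldsymbol{\mathcal{B}}_{k,i_2,:,:}$. Tensor-hypervector product: $(\boldsymbol{\mathcal{A}}*A)_{i,:,:}=\sum_k\boldsymbol{\mathcal{A}}_{i,k,:,:}A_{k,:,:}$; left action of a 3-mode tensor $B^D$ (superscript $D$ marks tensors acting from the left): $(B^D*\boldsymbol{\mathcal{A}})^D_{i,:,:}=\sum_k B^D_{k,:,:}\boldsymbol{\mathcal{A}}_{k,i,:,:}$; hypervector inner product $B^D*A=\sum_kB^D_{k,:,:}A_{k,:,:}\in\mathbb{C}^{M\times M}$. These products are associative. For $\boldsymbol{\alpha}\in\mathbb{C}^{M\times M}$ and a 3-mode tensor $A$: $(A\times\boldsymbol{\alpha})_{i,:,:}=A_{i,:,:}\boldsymbol{\alpha}$, $(\boldsymbol{\alpha}\times A)_{i,:,:}=\boldsymbol{\alpha}A_{i,:,:}$; analogously for 4-mode tensors, $(\boldsymbol{\mathcal{A}}\times\boldsymbol{\alpha})_{i_1,i_2,:,:}=\boldsymbol{\mathcal{A}}_{i_1,i_2,:,:}\boldsymbol{\alpha}$ and $(\boldsymbol{\alpha}\times\boldsymbol{\mathcal{A}})_{i_1,i_2,:,:}=\boldsymbol{\alpha}\boldsymbol{\mathcal{A}}_{i_1,i_2,:,:}$.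 For $\mathbf{a}\in\mathbb{C}^N$, $\mathbf{a}\otimes I_M\in\mathbb{C}^{N\times M\times M}$ has slices $(\mathbf{a}\otimes I_M)_{i,:,:}=\mathbf{a}_iI_M$. The $*$-identity $\boldsymbol{\mathcal{I}}_*\in\mathbb{C}^{n\times n\times M\times M}$ has slices $I_M$ for $i_1=i_2$ and $0$ otherwise; $\boldsymbol{\mathcal{A}}^{0_*}=\boldsymbol{\mathcal{I}}_*$ and $\boldsymbol{\mathcal{A}}^{k_*}$ is the $k$-fold $*$-product of $\boldsymbol{\mathcal{A}}$ with itself. Krylov-type subspaces: for $A,B^D\in\mathbb{C}^{N\times M\times M}$, $\mathcal{K}_n(\boldsymbol{\mathcal{A}},A)=\{\sum_{k=0}^{n-1}(\boldsymbol{\mathcal{A}}^{k_*}\times\boldsymbol{\eta}_k)*A:\boldsymbol{\eta}_k\in\mathbb{C}^{M\times M}\}$ and $\mathcal{K}_n^D(B^D,\boldsymbol{\mathcal{A}})=\{B^D*\sum_{k=0}^{n-1}(\boldsymbol{\eta}_k^H\times\boldsymbol{\mathcal{A}}^{k_*}):\boldsymbol{\eta}_k\in\mathbb{C}^{M\times M}\}$. For $V_1,\dots,V_n\in\mathbb{C}^{N\times M\times M}$, $\langle V_1,\dots,V_n\rangle=\{\sum_kV_k\times\boldsymbol{\eta}_k:\boldsymbol{\eta}_k\in\mathbb{C}^{M\times M}\}$, and for $W_1^D,\dots,W_n^D$, $\langle W_1^D,\dots,W_n^D\rangle=\{\sum_k\boldsymbol{\eta}_k\times W_k^D:\boldsymbol{\eta}_k\in\mathbb{C}^{M\times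 M}\}$. Tensor non-Hermitian Lanczos process: set $V=\mathbf{v}\otimes I_M$, $W^D=\overline{\mathbf{w}}\otimes I_M$, $V_0=W_0^D=0$, $\boldsymbol{\beta}_1=0$, $V_1=V$, $W_1^D=W^D$. For $k=1,2,\dots$: $\boldsymbol{\alpha}_k=W_k^D*\boldsymbol{\mathcal{A}}*V_k$; $\widehat W_{k+1}^D=W_k^D*\boldsymbol{\mathcal{A}}-\boldsymbol{\alpha}_k\times W_k^D-\boldsymbol{\beta}_k\times W_{k-1}^D$; $\widehat V_{k+1}=\boldsymbol{\mathcal{A}}*V_k-V_k\times\boldsymbol{\alpha}_k-V_{k-1}\times\boldsymbol{\gamma}_k$ (the term with $\boldsymbol{\gamma}_1$ vanishes since $V_0=0$); choose a nonsingular $\boldsymbol{\gamma}_{k+1}\in\mathbb{C}^{M\times M}$; $\boldsymbol{\beta}_{k+1}=\boldsymbol{\gamma}_{k+1}^{-1}(\widehat W_{k+1}^D*\widehat V_{k+1})$; if $\boldsymbol{\beta}_{k+1}$ is singular the process stops, otherwise $V_{k+1}=\widehat V_{k+1}\times\boldsymbol{\beta}_{k+1}^{-1}$ and $W_{k+1}^D=\boldsymbol{\gamma}_{k+1}^{-1}\times\widehat W_{k+1}^D$. Basis tensors: $\boldsymbol{\mathcal{V}}_n\in\mathbb{C}^{N\times n\times M\times M}$ with $(\boldsymbol{\mathcal{V}}_n)_{:,k,:,:}=V_k$ and $\boldsymbol{\mathcal{W}}_n\in\mathbb{C}^{n\times N\times M\times M}$ with $(\boldsymbol{\mathcal{W}}_n)_{k,:,:,:}=W_k^D$,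 $k=1,\dots,n$. Tridiagonal tensor $\boldsymbol{\mathcal{T}}_n\in\mathbb{C}^{n\times n\times M\times M}$: $(\boldsymbol{\mathcal{T}}_n)_{i,i,:,:}=\boldsymbol{\alpha}_i$ ($1\le i\le n$), $(\boldsymbol{\mathcal{T}}_n)_{i,i+1,:,:}=\boldsymbol{\gamma}_{i+1}$ ($1\le i\le n-1$), $(\boldsymbol{\mathcal{T}}_n)_{i,i-1,:,:}=\boldsymbol{\beta}_i$ ($2\le i\le n$), all other slices zero. *)

(* Defs.v *)
(* Scalars: an arbitrary numClosedFieldType C (with complex
   conjugation x^* ); the complex numbers are an instance. *)
From HB Require Import structures.
From mathcomp Require Import all_boot all_order all_algebra.
Set Implicit Arguments. Unset Strict Implicit. Unset Printing Implicit Defensive.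
Import Order.TTheory GRing.Theory Num.Theory.
Local Open Scope ring_scope.

(* 3-mode tensor (hypervector) in C^{N x M x M}: slice i is X i. *)
Definition hvec (C : numClosedFieldType) (N M : nat) := 'I_N -> 'M[C]_M.
(* 4-mode tensor in C^{N1 x N2 x M x M}: slice (i1,i2) is A i1 i2. *)
Definition tens (C : numClosedFieldType) (N1 N2 M : nat) := 'I_N1 -> 'I_N2 -> 'M[C]_M.

Section Ops.
Variables (C : numClosedFieldType) (M : nat).

Definition tmul N1 K N2 (A : tens C N1 K M) (B : tens C K N2 M) : tens C N1 N2 M :=
  fun i j => \sum_(k < K) A i k *m B k j.
Definition tvmul N1 K (A : tens C N1 K M) (X : hvec C K M) : hvec C N1 M :=
  fun i => \sum_(k < K) A i k *m X k.
Definition vtmul K N2 (B : hvec C K M) (A : tens C K N2 M) : hvec C N2 M :=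
  fun i => \sum_(k < K) B k *m A k i.
Definition hinner K (B X : hvec C K M) : 'M[C]_M := \sum_(k < K) B k *m X k.
Definition tscale_r N1 N2 (A : tens C N1 N2 M) (a : 'M[C]_M) : tens C N1 N2 M :=
  fun i j => A i j *m a.
Definition tscale_l N1 N2 (a : 'M[C]_M) (A : tens C N1 N2 M) : tens C N1 N2 M :=
  fun i j => a *m A i j.
Definition tid n : tens C n n M := fun i j => if i == j then 1%:M else 0.
Definition tpow N (A : tens C N N M) (k : nat) : tens C N N M :=
  iter k (tmul A) (@tid N).
Definition kronI N (a : 'cV[C]_N) : hvec C N M := fun i => a i 0 *: 1%:M.
Definition ctr (a : 'M[C]_M) : 'M[C]_M := (map_mx Num.conj a)^T.

Definition krylov N (A : tens C N N M) (X : hvec C N M) (n : nat) (Y : hvec C N M) : Prop :=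
  exists eta : nat -> 'M[C]_M,
    forall i, Y i = \sum_(k < n) tvmul (tscale_r (tpow A k) (eta k)) X i.
Definition krylovD N (B : hvec C N M) (A : tens C N N M) (n : nat) (Y : hvec C N M) : Prop :=
  exists eta : nat -> 'M[C]_M,
    forall i, Y i = vtmul B (fun l j => \sum_(k < n) tscale_l (ctr (eta k)) (tpow A k) l j) i.
Definition rspan N (V : nat -> hvec C N M) (n : nat) (Y : hvec C N M) : Prop :=
  exists eta : nat -> 'M[C]_M, forall i, Y i = \sum_(k < n) V k.+1 i *m eta k.+1.
Definition lspan N (W : nat -> hvec C N M) (n : nat) (Y : hvec C N M) : Prop :=
  exists eta : nat -> 'M[C]_M, forall i, Y i = \sum_(k < n) eta k.+1 *m W k.+1 i.

(* State at stage k (k >= 0): (V_k, V_{k+1}, W_k, W_{k+1}, beta_{k+1}),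
   with V_0 = W_0 = 0, beta_1 = 0, V_1 = v (x) I, W_1 = conj w (x) I.
   gam k is gamma_k.  Inverses are invmx (total); the hypotheses of the
   theorem guarantee they are genuine inverses where used. *)
Record lstate N := LState {
  sVp : hvec C N M; sVc : hvec C N M; sWp : hvec C N M; sWc : hvec C N M;
  sb : 'M[C]_M }.

Definition lstep N (A : tens C N N M) (gam : nat -> 'M[C]_M) (k : nat)
  (s : lstate N) : lstate N :=
  let a := hinner (vtmul (sWc s) A) (sVc s) in
  let Vh := fun i => tvmul A (sVc s) i - sVc s i *m a - sVp s i *m gam k.+1 in
  let Wh := fun i => vtmul (sWc s) A i - a *m sWc s i - sb s *m sWp s i in
  let g := gam k.+2 in
  let b := invmx g *m hinner Wh Vh in
  LState (sVc s) (fun i => Vh i *m invmx b) (sWc s) (fun i => invmx g *m Wh i) b.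

Fixpoint lanczos N (A : tens C N N M) (v w : 'cV[C]_N) (gam : nat -> 'M[C]_M)
  (k : nat) : lstate N :=
  match k with
  | 0 => LState (fun _ => 0) (kronI v) (fun _ => 0) (kronI (map_mx Num.conj w)) 0
  | k'.+1 => lstep A gam k' (lanczos A v w gam k')
  end.

Definition LV N A v w gam (k : nat) : hvec C N M :=
  if k is k'.+1 then sVc (@lanczos N A v w gam k') else (fun _ => 0).
Definition LW N A v w gam (k : nat) : hvec C N M :=
  if k is k'.+1 then sWc (@lanczos N A v w gam k') else (fun _ => 0).
Definition Lbeta N A v w gam (k : nat) : 'M[C]_M :=
  if k is k'.+1 then sb (@lanczos N A v w gam k') else 0.
Definition Lalpha N A v w gam (k : nat) : 'M[C]_M :=
  hinner (vtmul (@LW N A v w gam k) A) (LV A v w gam k).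

(* basis tensors (0-based index i stands for the paper's index i+1) *)
Definition Vbasis N A v w gam (n : nat) : tens C N n M :=
  fun i k => @LV N A v w gam k.+1 i.
Definition Wbasis N A v w gam (n : nat) : tens C n N M :=
  fun k i => @LW N A v w gam k.+1 i.
Definition Tn N A v w gam (n : nat) : tens C n n M :=
  fun i j =>
    if (j : nat) == i then @Lalpha N A v w gam i.+1
    else if (j : nat) == i.+1 then gam i.+2
    else if (i : nat) == j.+1 then Lbeta A v w gam i.+1
    else 0.
End Ops.

Arguments Vbasis [C M N] A v w gam n _ _.
Arguments Wbasis [C M N] A v w gam n _ _.
Arguments Tn [C M N] A v w gam n _ _.

(* Main.v *)
Require Import Defs.
From HB Require Import structures.
From mathcomp Require Import all_boot all_order all_algebra zify.
Set Implicit Arguments. Unset Strict Implicit. Unset Printing Implicit Defensive.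
Import Order.TTheory GRing.Theory Num.Theory.
Local Open Scope ring_scope.

Section Span.
Variables (C : numClosedFieldType) (N M : nat).
Local Notation hv := (hvec C N M).

Definition Sp (F : nat -> hv) (k : nat) (Y : hv) : Prop :=
  exists eta : nat -> 'M[C]_M, forall i, Y i = \sum_(m < k) F m i *m eta m.

Lemma S_ext F k Y Y' : (forall i, Y i = Y' i) -> Sp F k Y -> Sp F k Y'.
Proof. by move=> e [eta h]; exists eta => i; rewrite -e h. Qed.

Lemma S_0 F k : Sp F k (fun _ => 0).
Proof. by exists (fun _ => 0) => i; rewrite big1 // => m _; rewrite mulmx0. Qed.

Lemma S_0' F k Y : (forall i, Y i = 0) -> Sp F k Y.
Proof. by move=> h; apply: S_ext (S_0 F k) => i; rewrite h. Qed.

Lemma S_add F k Y Z : Sp F k Y -> Sp F k Z -> Sp F k (fun i => Y i + Z i).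
Proof.
move=> [e1 h1] [e2 h2]; exists (fun m => e1 m + e2 m) => i.
by rewrite h1 h2 -big_split /=; apply: eq_bigr => m _; rewrite mulmxDr.
Qed.

Lemma S_mulr F k Y a : Sp F k Y -> Sp F k (fun i => Y i *m a).
Proof.
move=> [e h]; exists (fun m => e m *m a) => i.
by rewrite h mulmx_suml; apply: eq_bigr => m _; rewrite mulmxA.
Qed.

Lemma S_sub F k Y Z : Sp F k Y -> Sp F k Z -> Sp F k (fun i => Y i - Z i).
Proof.
move=> hY hZ; apply: S_ext (S_add hY (S_mulr (-1%:M) hZ)) => i.
by rewrite mulmxN mulmx1.
Qed.

Lemma S_gen F k m : (m < k)%N -> Sp F k (F m).
Proof.
move=> mk; exists (fun l => if l == m then 1%:M else 0) => i.
rewrite (bigD1 (Ordinal mk)) //= eqxx mulmx1 big1 ?addr0 // => l.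
by rewrite -val_eqE /= => /negbTE ->; rewrite mulmx0.
Qed.

Lemma S_span F G k k' Y : (forall m, (m < k)%N -> Sp G k' (F m)) -> Sp F k Y -> Sp G k' Y.
Proof.
move=> hF [e h].
suff: Sp G k' (fun i => \sum_(m < k) F m i *m e m) by apply: S_ext => i; rewrite h.
elim: k hF {h} => [|k IH] hF; first by apply: S_0' => i; rewrite big_ord0.
apply: S_ext; first by move=> i; rewrite big_ord_recr /=; reflexivity.
apply: S_add; first by apply: IH => m mk; apply: hF; apply: ltnW.
exact: S_mulr (hF _ (ltnSn k)).
Qed.

Lemma S_mono F k k' Y : (k <= k')%N -> Sp F k Y -> Sp F k' Y.
Proof. by move=> kk; apply: S_span => m mk; apply: S_gen; apply: leq_trans kk. Qed.

Variables (X : nat -> hv) (Op : hv -> hv) (n : nat).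
Hypothesis Op_ext : forall Y Y', (forall i, Y i = Y' i) -> forall i, Op Y i = Op Y' i.
Hypothesis Op_lin : forall k (F : nat -> hv) (e : nat -> 'M[C]_M) i,
  Op (fun j => \sum_(m < k) F m j *m e m) i = \sum_(m < k) Op (F m) i *m e m.
Hypothesis X0 : forall i, X 0 i = 0.
Hypothesis fwd : forall m, (1 <= m)%N -> (m < n)%N -> exists a b c,
  forall i, X m.+1 i = (Op (X m) i - X m i *m a - X m.-1 i *m b) *m c.
Hypothesis bwd : forall m, (1 <= m)%N -> (m < n)%N -> exists a b c,
  forall i, Op (X m) i = X m.+1 i *m a + X m i *m b + X m.-1 i *m c.

Let Xs m := X m.+1.
Let Kr m := iter m Op (X 1).

Lemma Op_S F k Y : Sp F k Y -> Sp (fun m => Op (F m)) k (Op Y).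
Proof.
move=> [e h]; exists e => i.
by rewrite (Op_ext (fun j => h j)) Op_lin.
Qed.

Lemma Op_Kr k Y : Sp Kr k Y -> Sp Kr k.+1 (Op Y).
Proof.
move=> /Op_S; apply: S_span => m mk.
exact: (@S_gen Kr k.+1 m.+1).
Qed.

Lemma Op_Xs k Y : (k < n)%N -> Sp Xs k Y -> Sp Xs k.+1 (Op Y).
Proof.
move=> kn /Op_S; apply: S_span => m mk.
have [||a [b [c h]]] := bwd (m := m.+1) => //; first by apply: leq_ltn_trans kn.
apply: (@S_ext _ _ (fun i => X m.+2 i *m a + X m.+1 i *m b + X m i *m c)) => [i|]; first by rewrite h.
apply: S_add; first apply: S_add; apply: S_mulr.
- exact: (@S_gen Xs k.+1 m.+1).
- by apply: (@S_gen Xs k.+1 m); apply: ltnW.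
- case: m mk {h} => [|m] mk /=; first exact: S_0'.
  by apply: (@S_gen Xs k.+1 m); apply: ltnW; apply: ltnW.
Qed.

Lemma fwd_all m : (m < n)%N -> Sp Kr m (X m) /\ Sp Kr m.+1 (X m.+1).
Proof.
elim: m => [|m IH] mn.
  split; first exact: S_0'.
  exact: (@S_gen Kr 1 0).
have [_ h1] := IH (ltnW mn); split => //.
have [||a [b [c h]]] := fwd (m := m.+1) => //.
apply: (@S_ext _ _ (fun i => (Op (X m.+1) i - X m.+1 i *m a - X m i *m b) *m c)) => [i|]; first by rewrite h.
apply: S_mulr.
apply: S_sub; first apply: S_sub.
- exact: Op_Kr.
- apply: S_mulr; exact: S_mono (leqnSn _) h1.
- apply: S_mulr; apply: S_mono _ (proj1 (IH (ltnW mn))); by apply: leq_trans (leqnSn _) _.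
Qed.

Lemma bwd_all m : (m < n)%N -> Sp Xs m.+1 (Kr m).
Proof.
elim: m => [|m IH] mn; first exact: (@S_gen Xs 1 0).
exact: (Op_Xs mn (IH (ltnW mn))).
Qed.

Lemma span_eq Y : Sp Xs n Y <-> Sp Kr n Y.
Proof.
split; apply: S_span => m mn.
- exact: S_mono mn (proj2 (fwd_all mn)).
- exact: S_mono mn (bwd_all mn).
Qed.
End Span.

Section Conc.
Variables (C : numClosedFieldType) (N M : nat) (A : tens C N N M) (v w : 'cV[C]_N)
  (gam : nat -> 'M[C]_M).
Local Notation hv := (hvec C N M).
Local Notation V := (LV A v w gam).
Local Notation W := (LW A v w gam).
Local Notation al := (Lalpha A v w gam).
Local Notation be := (Lbeta A v w gam).

Lemma sVp_l k : sVp (lanczos A v w gam k) = V k. Proof. by case: k. Qed.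
Lemma sWp_l k : sWp (lanczos A v w gam k) = W k. Proof. by case: k. Qed.

Definition Vh k : hv := fun i => tvmul A (V k) i - V k i *m al k - V k.-1 i *m gam k.
Definition Wh k : hv := fun i => vtmul (W k) A i - al k *m W k i - be k *m W k.-1 i.

Lemma V_rec j i : V j.+2 i = Vh j.+1 i *m invmx (be j.+2).
Proof. by rewrite /Vh /= -sVp_l. Qed.
Lemma W_rec j i : W j.+2 i = invmx (gam j.+2) *m Wh j.+1 i.
Proof. by rewrite /Wh /= -sWp_l. Qed.
Lemma be_rec j : be j.+2 = invmx (gam j.+2) *m hinner (Wh j.+1) (Vh j.+1).
Proof. by rewrite /Wh /Vh /= -sVp_l -sWp_l. Qed.


Lemma hinner_ext (X X' Y Y' : hv) : (forall i, X i = X' i) -> (forall i, Y i = Y' i) ->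
  hinner X Y = hinner X' Y'.
Proof. by move=> e1 e2; apply: eq_bigr => k _; rewrite e1 e2. Qed.
Lemma hinner_mull a (X Y : hv) : hinner (fun i => a *m X i) Y = a *m hinner X Y.
Proof. by rewrite /hinner mulmx_sumr; apply: eq_bigr => k _; rewrite mulmxA. Qed.
Lemma hinner_mulr a (X Y : hv) : hinner X (fun i => Y i *m a) = hinner X Y *m a.
Proof. by rewrite /hinner mulmx_suml; apply: eq_bigr => k _; rewrite mulmxA. Qed.
Lemma hinner_addl (X X' Y : hv) : hinner (fun i => X i + X' i) Y = hinner X Y + hinner X' Y.
Proof. by rewrite /hinner -big_split; apply: eq_bigr => k _; rewrite mulmxDl. Qed.
Lemma hinner_addr (X Y Y' : hv) : hinner X (fun i => Y i + Y' i) = hinner X Y + hinner X Y'.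
Proof. by rewrite /hinner -big_split; apply: eq_bigr => k _; rewrite mulmxDr. Qed.
Lemma hinner_subl (X X' Y : hv) : hinner (fun i => X i - X' i) Y = hinner X Y - hinner X' Y.
Proof. by rewrite /hinner -sumrB; apply: eq_bigr => k _; rewrite mulmxBl. Qed.
Lemma hinner_subr (X Y Y' : hv) : hinner X (fun i => Y i - Y' i) = hinner X Y - hinner X Y'.
Proof. by rewrite /hinner -sumrB; apply: eq_bigr => k _; rewrite mulmxBr. Qed.
Lemma hinner0l (Y : hv) : hinner (fun _ => 0) Y = 0.
Proof. by rewrite /hinner big1 // => k _; rewrite mul0mx. Qed.
Lemma hinner_assoc (X Y : hv) : hinner (vtmul X A) Y = hinner X (tvmul A Y).
Proof.
rewrite /hinner /vtmul /tvmul.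
under eq_bigr do rewrite mulmx_suml.
rewrite exchange_big /=; apply: eq_bigr => l _.
by rewrite mulmx_sumr; apply: eq_bigr => k _; rewrite mulmxA.
Qed.

Hypothesis gam_unit : forall k, (2 <= k)%N -> gam k \in unitmx.

Lemma AV m i : (1 <= m)%N -> be m.+1 \in unitmx ->
  tvmul A (V m) i = V m.+1 i *m be m.+1 + V m i *m al m + V m.-1 i *m gam m.
Proof.
case: m => // m _ u; rewrite V_rec mulmxKV // /Vh /=.
by rewrite addrAC subrK subrK.
Qed.

Lemma WA m i : (1 <= m)%N ->
  vtmul (W m) A i = gam m.+1 *m W m.+1 i + al m *m W m i + be m *m W m.-1 i.
Proof.
case: m => // m _; rewrite W_rec mulKVmx ?gam_unit // /Wh /=.
by rewrite addrAC subrK subrK.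
Qed.

Definition d (i j : nat) : 'M[C]_M := if i == j then 1%:M else 0.
Definition tri (i j : nat) : 'M[C]_M :=
  if j == i then al i else if j == i.+1 then gam j else if i == j.+1 then be i else 0.
Definition P k := forall i j, (0 < i <= k)%N -> (0 < j <= k)%N -> hinner (W i) (V j) = d i j.

Lemma P' k i j : P k -> (i <= k)%N -> (j <= k)%N -> (0 < i)%N || (0 < j)%N ->
  hinner (W i) (V j) = d i j.
Proof.
move=> Pk ik jk; case: i ik => [|i] ik.
  by rewrite /= => j0; rewrite hinner0l /d; case: j j0 jk.
case: j jk => [|j] jk _; last by apply: Pk; apply/andP.
by rewrite /hinner big1 // => l _; rewrite mulmx0.
Qed.

Ltac simpl_eqs := repeat match goal with
  | |- context [?a == ?b :> nat] =>
      (have -> : (a == b) = true by apply/eqP; lia) ||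
      (have -> : (a == b) = false by apply/eqP; lia) end.

Variable n : nat.
Hypothesis be_unit : forall k, (2 <= k <= n)%N -> be k \in unitmx.

Lemma tri_lem k i j : P k -> (k <= n)%N -> (0 < i <= k)%N -> (0 < j <= k)%N ->
  hinner (W i) (tvmul A (V j)) = tri i j.
Proof.
move=> Pk kn /andP[i0 ik] /andP[j0 jk].
have [jlt|jge] := ltnP j k.
  rewrite (hinner_ext (X' := W i)
    (Y' := fun x => V j.+1 x *m be j.+1 + V j x *m al j + V j.-1 x *m gam j)) //; last first.
    move=> x; apply: AV => //; apply: be_unit; lia.
  rewrite !hinner_addr !hinner_mulr !(P' Pk) ?i0 //; try lia.
  rewrite /d /tri.
  case: (ltngtP i j) => [ij|ij|<-]; simpl_eqs.
  - case: (eqVneq j i.+1) => [->|ne]; simpl_eqs.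
      by rewrite !mul0mx mul1mx !addr0 add0r.
    by rewrite !mul0mx !addr0.
  - case: (eqVneq i j.+1) => [->|ne]; simpl_eqs.
      by rewrite !mul0mx mul1mx !addr0.
    by rewrite !mul0mx !addr0.
  - by rewrite !mul0mx mul1mx addr0 add0r.
have -> : j = k by lia.
have [ilt|ige] := ltnP i k; last first.
  have -> : i = k by lia.
  by rewrite -hinner_assoc /tri eqxx.
rewrite -hinner_assoc (hinner_ext (X' :=
   fun x => gam i.+1 *m W i.+1 x + al i *m W i x + be i *m W i.-1 x) (Y' := V k)) //; last first.
  by move=> x; apply: WA.
rewrite !hinner_addl !hinner_mull !(P' Pk) ?j0 ?orbT //; try lia.
rewrite /d /tri.
case: (ltngtP i k) => [ij|ij|ek]; try lia; simpl_eqs.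
case: (eqVneq k i.+1) => [->|ne]; simpl_eqs.
  by rewrite !mulmx0 mulmx1 !addr0.
by rewrite !mulmx0 !addr0.
Qed.

Lemma P_step k : (1 <= k)%N -> (k < n)%N -> P k -> P k.+1.
Proof.
case: k => // k _ kn Pk i j /andP[i0 ik] /andP[j0 jk].
have [ik'|ik'] := leqP i k.+1; have [jk'|jk'] := leqP j k.+1.
- by apply: Pk; apply/andP.
- have -> : j = k.+2 by lia.
  rewrite (hinner_ext (X' := W i) (Y' := fun x => Vh k.+1 x *m invmx (be k.+2))) //;
    last by move=> x; rewrite V_rec.
  rewrite hinner_mulr /Vh !hinner_subr !hinner_mulr !(P' Pk) ?i0 //; try lia.
  rewrite (tri_lem Pk) ?i0 //; try lia.
  rewrite /d /tri; simpl_eqs.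
  case: (ltngtP i k.+1) => [ij|ij|->]; try lia; simpl_eqs.
  + case: (eqVneq i k) => [->|ne]; simpl_eqs.
      by rewrite ?mul0mx ?mul1mx ?mulmx0 ?mulmx1 ?subr0 ?subrr ?sub0r ?oppr0 ?mul0mx ?mulmx0 ?subrr.
    by rewrite ?mul0mx ?mul1mx ?mulmx0 ?mulmx1 ?subr0 ?subrr ?sub0r ?oppr0 ?mul0mx ?mulmx0 ?subrr.
  + by rewrite ?mul0mx ?mul1mx ?mulmx0 ?mulmx1 ?subr0 ?subrr ?sub0r ?oppr0 ?mul0mx ?mulmx0 ?subrr.
- have -> : i = k.+2 by lia.
  rewrite (hinner_ext (X' := fun x => invmx (gam k.+2) *m Wh k.+1 x) (Y' := V j)) //;
    last by move=> x; rewrite W_rec.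
  rewrite hinner_mull /Wh !hinner_subl !hinner_mull !(P' Pk) ?j0 ?orbT //; try lia.
  rewrite hinner_assoc (tri_lem Pk) ?j0 //; try lia.
  rewrite /d /tri; simpl_eqs.
  case: (ltngtP j k.+1) => [ij|ij|->]; try lia; simpl_eqs.
  + case: (eqVneq j k) => [->|ne]; simpl_eqs.
      by rewrite ?mul0mx ?mul1mx ?mulmx0 ?mulmx1 ?subr0 ?subrr ?sub0r ?oppr0 ?mul0mx ?mulmx0 ?subrr.
    by rewrite ?mul0mx ?mul1mx ?mulmx0 ?mulmx1 ?subr0 ?subrr ?sub0r ?oppr0 ?mul0mx ?mulmx0 ?subrr.
  + by rewrite ?mul0mx ?mul1mx ?mulmx0 ?mulmx1 ?subr0 ?subrr ?sub0r ?oppr0 ?mul0mx ?mulmx0 ?subrr.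
- have -> : i = k.+2 by lia.
  have -> : j = k.+2 by lia.
  rewrite (hinner_ext (X' := fun x => invmx (gam k.+2) *m Wh k.+1 x)
     (Y' := fun x => Vh k.+1 x *m invmx (be k.+2))); last 2 first.
    by move=> x; rewrite W_rec.
    by move=> x; rewrite V_rec.
  rewrite hinner_mull hinner_mulr mulmxA -be_rec /d eqxx mulmxV //.
  apply: be_unit; lia.
Qed.

Hypothesis wv : \sum_(i < N) Num.conj (w i 0) * v i 0 = 1.

Lemma P1 : P 1.
Proof.
move=> i j /andP[i0 i1] /andP[j0 j1].
have -> : i = 1%N by lia.
have -> : j = 1%N by lia.
rewrite /d eqxx /hinner /= /kronI.
under eq_bigr do rewrite -scalemxAl mul1mx scalerA mxE.
by rewrite -scaler_suml wv scale1r.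
Qed.

Lemma P_n : (1 <= n)%N -> P n.
Proof.
move=> n1; suff: forall k, (1 <= k <= n)%N -> P k by apply; rewrite n1 leqnn.
elim=> [|k IH] /andP[k1 kn]; first by [].
case: k IH k1 kn => [|k] IH _ kn; first exact: P1.
apply: P_step => //; apply: IH; lia.
Qed.

Lemma Op_ext_r (Y Y' : hv) : (forall i, Y i = Y' i) -> forall i, tvmul A Y i = tvmul A Y' i.
Proof. by move=> e i; apply: eq_bigr => k _; rewrite e. Qed.

Lemma Op_lin_r k (F : nat -> hv) (e : nat -> 'M[C]_M) i :
  tvmul A (fun j => \sum_(m < k) F m j *m e m) i = \sum_(m < k) tvmul A (F m) i *m e m.
Proof.
rewrite /tvmul; under eq_bigr do rewrite mulmx_sumr.
rewrite exchange_big /=; apply: eq_bigr => m _.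
by rewrite mulmx_suml; apply: eq_bigr => l _; rewrite mulmxA.
Qed.

Lemma tvmul_tid (X : hv) i : tvmul (@tid C M N) X i = X i.
Proof.
rewrite /tvmul (bigD1 i) //= /tid eqxx mul1mx big1 ?addr0 // => l.
by rewrite eq_sym => /negbTE ->; rewrite mul0mx.
Qed.

Lemma tvmul_tmul (P Q : tens C N N M) (X : hv) i :
  tvmul (tmul P Q) X i = tvmul P (tvmul Q X) i.
Proof.
rewrite /tvmul /tmul; under eq_bigr do rewrite mulmx_suml.
rewrite exchange_big /=; apply: eq_bigr => m _.
by rewrite mulmx_sumr; apply: eq_bigr => l _; rewrite mulmxA.
Qed.

Lemma tpow_iter k (X : hv) i : tvmul (tpow A k) X i = iter k (tvmul A) X i.
Proof.
elim: k i => [|k IH] i; first exact: tvmul_tid.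
by rewrite /tpow iterS -/(tpow A k) tvmul_tmul /=; apply: Op_ext_r.
Qed.

Lemma tscale_kron (P : tens C N N M) e i :
  tvmul (tscale_r P e) (kronI M v) i = tvmul P (kronI M v) i *m e.
Proof.
rewrite /tvmul /tscale_r /kronI mulmx_suml; apply: eq_bigr => l _.
by rewrite -!scalemxAr !mulmx1 scalemxAl.
Qed.

Lemma rspan_S Y : rspan V n Y <-> Sp (fun m => V m.+1) n Y.
Proof.
split=> [[e h]|[e h]]; first by exists (fun m => e m.+1).
by exists (fun m => e m.-1).
Qed.

Lemma krylov_S Y : krylov A (kronI M v) n Y <-> Sp (fun m => iter m (tvmul A) (V 1)) n Y.
Proof.
split=> [[e h]|[e h]]; exists e => i; rewrite h; apply: eq_bigr => m _;
  by rewrite tscale_kron tpow_iter.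
Qed.

Lemma rspan_krylov Y : rspan V n Y <-> krylov A (kronI M v) n Y.
Proof.
rewrite rspan_S krylov_S; apply: span_eq.
- exact: Op_ext_r.
- exact: Op_lin_r.
- by [].
- case=> // m _ mn; exists (al m.+1), (gam m.+1), (invmx (be m.+2)) => i.
  by rewrite V_rec.
- move=> m m1 mn; exists (be m.+1), (al m), (gam m) => i.
  apply: AV => //; apply: be_unit; lia.
Qed.

Lemma trS K (F : 'I_K -> 'M[C]_M) : (\sum_(k<K) F k)^T = \sum_(k<K) (F k)^T.
Proof. by rewrite linear_sum. Qed.
Lemma trB (X Y : 'M[C]_M) : (X - Y)^T = X^T - Y^T.
Proof. by rewrite linearB. Qed.
Lemma trD (X Y : 'M[C]_M) : (X + Y)^T = X^T + Y^T.
Proof. by rewrite linearD. Qed.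

Definition OpL (Z : hv) : hv := fun i => \sum_(k < N) (A k i)^T *m Z k.
Definition XL m : hv := fun i => (W m i)^T.

Lemma Op_ext_l (Y Y' : hv) : (forall i, Y i = Y' i) -> forall i, OpL Y i = OpL Y' i.
Proof. by move=> e i; apply: eq_bigr => k _; rewrite e. Qed.

Lemma Op_lin_l k (F : nat -> hv) (e : nat -> 'M[C]_M) i :
  OpL (fun j => \sum_(m < k) F m j *m e m) i = \sum_(m < k) OpL (F m) i *m e m.
Proof.
rewrite /OpL; under eq_bigr do rewrite mulmx_sumr.
rewrite exchange_big /=; apply: eq_bigr => m _.
by rewrite mulmx_suml; apply: eq_bigr => l _; rewrite mulmxA.
Qed.

Lemma trvt (Z : hv) (P : tens C N N M) i :
  (vtmul Z P i)^T = \sum_(k < N) (P k i)^T *m (Z k)^T.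
Proof. by rewrite /vtmul trS; apply: eq_bigr => k _; rewrite trmx_mul. Qed.

Lemma lspan_S Y : lspan W n Y <-> Sp (fun m => XL m.+1) n (fun i => (Y i)^T).
Proof.
split=> [[e h]|[e h]].
  exists (fun m => (e m.+1)^T) => i; rewrite h trS; apply: eq_bigr => m _.
  by rewrite trmx_mul.
exists (fun m => (e m.-1)^T) => i; apply: trmx_inj; rewrite h trS.
by apply: eq_bigr => m _; rewrite trmx_mul trmxK.
Qed.

Lemma vtmul_tid (Z : hv) i : vtmul Z (@tid C M N) i = Z i.
Proof.
rewrite /vtmul (bigD1 i) //= /tid eqxx mulmx1 big1 ?addr0 // => l.
by move=> /negbTE ->; rewrite mulmx0.
Qed.

Lemma vtmul_tmul (Z : hv) (P Q : tens C N N M) i :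
  vtmul Z (tmul P Q) i = vtmul (vtmul Z P) Q i.
Proof.
rewrite /vtmul /tmul; under eq_bigr do rewrite mulmx_sumr.
rewrite exchange_big /=; apply: eq_bigr => m _.
by rewrite mulmx_suml; apply: eq_bigr => l _; rewrite mulmxA.
Qed.

Lemma iter_ext_l k (Y Y' : hv) : (forall i, Y i = Y' i) -> forall i, iter k OpL Y i = iter k OpL Y' i.
Proof.
elim: k => [|k IH] e i //=; apply: Op_ext_l => j; exact: IH.
Qed.

Lemma tpow_iter_l k (Z : hv) i : (vtmul Z (tpow A k) i)^T = iter k OpL (fun j => (Z j)^T) i.
Proof.
elim: k Z i => [|k IH] Z i; first by rewrite /= vtmul_tid.
rewrite /tpow iterS -/(tpow A k) vtmul_tmul IH iterSr.
by apply: iter_ext_l => j; rewrite trvt.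
Qed.

Lemma krylovD_S Y : krylovD (kronI M (map_mx Num.conj w)) A n Y <->
   Sp (fun m => iter m OpL (XL 1)) n (fun i => (Y i)^T).
Proof.
have key : forall (c : nat -> 'M[C]_M) i,
  vtmul (kronI M (map_mx Num.conj w)) (fun l j => \sum_(k < n) tscale_l (c k) (tpow A k) l j) i
  = \sum_(k < n) c k *m vtmul (kronI M (map_mx Num.conj w)) (tpow A k) i.
  move=> c i; rewrite /vtmul /tscale_l /kronI.
  under eq_bigr do rewrite mulmx_sumr.
  rewrite exchange_big /=; apply: eq_bigr => k _.
  rewrite mulmx_sumr; apply: eq_bigr => l _.
  by rewrite scalemx1 !mulmxA scalar_mxC.
split=> [[e h]|[e h]].
  exists (fun m => (ctr (e m))^T) => i; rewrite h (key (fun k => ctr (e k)) i) trS; apply: eq_bigr => m _.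
  by rewrite trmx_mul tpow_iter_l.
exists (fun m => map_mx Num.conj (e m)) => i; apply: trmx_inj; rewrite h (key (fun k => ctr (map_mx Num.conj (e k))) i) trS.
apply: eq_bigr => m _; rewrite trmx_mul tpow_iter_l; congr (_ *m _).
by rewrite /ctr trmxK; apply/matrixP => a b; rewrite !mxE conjCK.
Qed.

Lemma lspan_krylovD Y : lspan W n Y <-> krylovD (kronI M (map_mx Num.conj w)) A n Y.
Proof.
rewrite lspan_S krylovD_S; apply: span_eq.
- exact: Op_ext_l.
- exact: Op_lin_l.
- by move=> i; rewrite /XL /= trmx0.
- case=> // m _ mn; exists (al m.+1)^T, (be m.+1)^T, (invmx (gam m.+2))^T => i.
  rewrite /XL W_rec trmx_mul /Wh !trB !trmx_mul trvt.
  by [].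
- move=> m m1 mn; exists (gam m.+1)^T, (al m)^T, (be m)^T => i.
  rewrite /OpL /XL -trvt WA // !trD !trmx_mul.
  by [].
Qed.
End Conc.

From Stdlib Require Import FunctionalExtensionality.

Theorem mainTheorem2 (C : numClosedFieldType) (N M : nat)
  (A : tens C N N M) (v w : 'cV[C]_N) (gam : nat -> 'M[C]_M) (n : nat) :
  \sum_(i < N) Num.conj (w i 0) * v i 0 = 1 ->
  (forall k, (2 <= k)%N -> gam k \in unitmx) ->
  (1 <= n)%N ->
  (forall k, (2 <= k <= n)%N -> Lbeta A v w gam k \in unitmx) ->
  (* (a) *)
  ((forall j k, (1 <= j <= n)%N -> (1 <= k <= n)%N ->
      hinner (LW A v w gam k) (LV A v w gam j) = if k == j then 1%:M else 0)
   /\ tmul (Wbasis A v w gam n) (Vbasis A v w gam n) = @tid C M n)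
  (* (b) *)
  /\ (forall Y, rspan (LV A v w gam) n Y <-> krylov A (kronI M v) n Y)
  /\ (forall Y, lspan (LW A v w gam) n Y <->
                krylovD (kronI M (map_mx Num.conj w)) A n Y)
  (* (c) *)
  /\ Tn A v w gam n = tmul (tmul (Wbasis A v w gam n) A) (Vbasis A v w gam n).
Proof.
move=> wv gu n1 bu.
have Pn : P A v w gam n by apply: P_n.
split; [split|split; [|split]].
- by move=> j k jn kn; rewrite Pn.
- apply: functional_extensionality => i; apply: functional_extensionality => j.
  change (hinner (LW A v w gam i.+1) (LV A v w gam j.+1) = @tid C M n i j).
  by rewrite Pn ?ltn_ord // /d /tid eqSS.
- by move=> Y; apply: rspan_krylov.
- by move=> Y; apply: lspan_krylovD.
- apply: functional_extensionality => i; apply: functional_extensionality => j.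
  change (Tn A v w gam n i j = hinner (vtmul (LW A v w gam i.+1) A) (LV A v w gam j.+1)).
  rewrite hinner_assoc (tri_lem gu bu Pn) ?ltn_ord //.
  rewrite /tri /Tn !eqSS.
  case: (eqVneq (j : nat) i.+1) => [->|]; last by [].
  by rewrite (gtn_eqF (ltnSn i)).
Qed.
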